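(* Let $G$ be a finite group with an abelian Sylow $p$-subgroup $P$. Then \[ \chi(\mathcal F^*_G)=\frac{|\{\varphi\in\mathcal F_G(P): C_P(\varphi)>1\}|}{|\mathcal F_G(P)|}. \]
   Context: $\mathcal F_G(P)=N_G(P)/C_G(P)$, viewed as the group of automorphisms of $P$ induced by conjugation by elements of $N_G(P)$; $C_P(\varphi)$ is the subgroup of elements of $P$ fixed by $\varphi$. $\mathcal F^*_G$ is the category whose objects are the nonidentity $p$-subgroups of $G$, with $\mathcal F^*_G(H,K)=C_G(H)\backslash N_G(H,K)$, $N_G(H,K)=\{g\in G:g^{-1}Hg\le K\}$, composition induced by multiplication. $\chi$ is Leinster's Euler characteristic: for a finite category $\mathcal C$, a weighting is $k^\bullet$ with $\sum_b|\mathcal C(a,b)|k^b=1$ for all $a$, a coweighting is $k_\bullet$ with $\sum_ak_a|\mathcal C(a,b)|=1$ for all $b$, and if both exist $\chi(\mathcal C)=\sum_bk^b=\sum_ak_a$. *)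

(* Defs.v *)
From mathcomp Require Import all_boot all_order all_algebra all_fingroup all_solvable.
Set Implicit Arguments.
Unset Strict Implicit.
Unset Printing Implicit Defensive.
Import GRing.Theory.
Local Open Scope group_scope.

Section Defs.
Variable gT : finGroupType.

Definition Fstar_obj (p : nat) (G : {set gT}) : {set {group gT}} :=
  [set H : {group gT} | [&& H \subset G, p.-group H & H != 1 :> {set gT}]].

(* N_G(H,K) = { g in G | g^-1 H g <= K }  (H :^ g = g^-1 H g in MathComp) *)
Definition transporter (G H K : {set gT}) : {set gT} :=
  [set g in G | H :^ g \subset K].

(* F^*_G(H,K) = C_G(H) \ N_G(H,K), the set of right cosets C_G(H) g. *)
Definition Fstar_hom (G H K : {set gT}) : {set {set gT}} :=
  [set 'C_G(H) :* g | g in transporter G H K].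

Definition is_weighting (p : nat) (G : {set gT}) (k : {group gT} -> rat) :=
  forall a, a \in Fstar_obj p G ->
    (\sum_(b in Fstar_obj p G) (#|Fstar_hom G a b|)%:R * k b = 1)%R.

Definition is_coweighting (p : nat) (G : {set gT}) (k : {group gT} -> rat) :=
  forall b, b \in Fstar_obj p G ->
    (\sum_(a in Fstar_obj p G) k a * (#|Fstar_hom G a b|)%:R = 1)%R.

(* chi(F^*_G) = x : a weighting and a coweighting exist, and the Euler
   characteristic (sum of the weights, independent of the choice by Leinster)
   equals x. *)
Definition Fstar_euler_char_is (p : nat) (G : {set gT}) (x : rat) : Prop :=
  (exists k, is_weighting p G k /\ (\sum_(b in Fstar_obj p G) k b)%R = x) /\
  (exists k, is_coweighting p G k /\ (\sum_(a in Fstar_obj p G) k a)%R = x).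

(* F_G(P) : automorphisms of P induced by conjugation by elements of N_G(P),
   represented as functions gT -> gT (identity outside P). *)
Definition conj_on (P : {set gT}) (g : gT) : {ffun gT -> gT} :=
  [ffun x => if x \in P then x ^ g else x].

Definition FG (G P : {set gT}) : {set {ffun gT -> gT}} :=
  [set conj_on P g | g in 'N_G(P)].

Definition CP (P : {set gT}) (phi : {ffun gT -> gT}) : {set gT} :=
  [set x in P | phi x == x].

End Defs.

(* Main.v *)
Require Import Defs.
From mathcomp Require Import all_boot all_order all_algebra all_fingroup all_solvable.
From mathcomp Require Import zify.
From Stdlib Require Import Lia.
Import GRing.Theory Num.Theory.
From mathcomp Require Import ring.
Local Open Scope group_scope.
Local Open Scope ring_scope.
Local Open Scope group_scope.
Local Open Scope ring_scope.
Section Rec.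
Variables (T : finType) (R : T -> T -> bool) (m : T -> nat) (c : T -> rat).
Hypothesis Hm : forall x y, R x y -> (m y < m x)%N.

Fixpoint kf (n : nat) (x : T) : rat :=
  if n is n'.+1 then c x - \sum_(y | R x y) kf n' y else 0.

Lemma kf_stable n1 : forall n2 x, (m x < n1)%N -> (m x < n2)%N -> kf n1 x = kf n2 x.
Proof.
elim: n1 => [|a IH] [|b] x //= h1 h2.
congr (_ - _); apply: eq_bigr => y Ry.
have := Hm _ _ Ry => h; apply: IH; lia.
Qed.

Lemma rec_exists : exists k : T -> rat, forall x, k x + \sum_(y | R x y) k y = c x.
Proof.
exists (fun x => kf (m x).+1 x) => x /=.
rewrite -[RHS](subrK (\sum_(y | R x y) kf (m x) y)); congr (_ + _).
apply: eq_bigr => y Ry; have := Hm _ _ Ry => h.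
change (kf (m y).+1 y = kf (m x) y); apply: kf_stable; lia.
Qed.

Lemma rec_unique (k1 k2 : T -> rat) :
  (forall x, k1 x + \sum_(y | R x y) k1 y = c x) ->
  (forall x, k2 x + \sum_(y | R x y) k2 y = c x) -> forall x, k1 x = k2 x.
Proof.
move=> h1 h2 x; have [n] := ubnP (m x); elim: n x => // n IH x lt.
have e : \sum_(y | R x y) k1 y = \sum_(y | R x y) k2 y.
  apply: eq_bigr => y Ry; apply: IH; have := Hm _ _ Ry; lia.
by apply: (addIr (\sum_(y | R x y) k1 y)); rewrite h1 e h2.
Qed.
End Rec.
Local Close Scope ring_scope.
Section Main.
Variables (gT : finGroupType) (p : nat) (G : {group gT}).
Local Notation O := (Fstar_obj p G).

Lemma inO (H : {group gT}) : (H \in O) = [&& H \subset G, p.-group H & H != 1 :> {set gT}].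
Proof. by rewrite inE. Qed.

Lemma O_conj (H : {group gT}) g : g \in G -> ((H :^ g)%G \in O) = (H \in O).
Proof.
by move=> gG; rewrite !inO /= sub_conjg (conjGid (groupVr gG)) pgroupJ conjsg_eq1.
Qed.

Lemma O_sub (H : {group gT}) : H \in O -> H \subset G.
Proof. by rewrite inO => /and3P[]. Qed.

Lemma card_centJ (H : {set gT}) g : g \in G -> #|'C_G(H :^ g)| = #|'C_G(H)|.
Proof. by move=> gG; rewrite centJ -{1}(conjGid gG) -conjIg cardJg. Qed.

Lemma card_tr (H K : {set gT}) :
  (#|transporter G H K|%:R = \sum_(g in G) ((H :^ g \subset K) : nat)%:R :> rat)%R.
Proof.
rewrite -natr_sum; congr (_ %:R)%R; rewrite -sum1_card big_mkcond /= [RHS]big_mkcond /=.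
by apply: eq_bigr => g _; rewrite inE; case: (g \in G); case: (H :^ g \subset K).
Qed.

Lemma card_hom (H K : {set gT}) :
  (#|Fstar_hom G H K| * #|'C_G(H)| = #|transporter G H K|)%N.
Proof.
rewrite -[#|transporter G H K|]sum1_card (partition_big_imset (fun g => 'C_G(H) :* g)) /=.
rewrite -/(Fstar_hom G H K) -sum_nat_const; apply: eq_bigr => X /imsetP[g0 tg0 ->].
rewrite sum1_card -(card_rcoset 'C_G(H) g0); apply: eq_card => x /=.
rewrite [in LHS]unfold_in /=; apply/idP/andP.
  move=> xC; split; last by apply/eqP/rcoset_eqP.
  case/rcosetP: xC => c cC ->; move: tg0; rewrite !inE => /andP[g0G sub].
  case/setIP: cC => cG cH; rewrite groupM //= conjsgM.
  by rewrite (normP (subsetP (cent_sub H) c cH)).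
by case=> _ /eqP <-; apply: rcoset_refl.
Qed.
End Main.
Section W.
Variables (gT : finGroupType) (p : nat) (G : {group gT}).
Local Notation O := (Fstar_obj p G).

Definition cfun (H : {group gT}) : rat := (#|'C_G(H)|%:R / #|G|%:R)%R.
Definition Rw (x y : {group gT}) := (y \in O) && (x \proper y).

Lemma natr_neq0 {n : nat} : (0 < n)%N -> (n%:R != 0 :> rat)%R.
Proof. by rewrite Num.Theory.pnatr_eq0 -lt0n. Qed.

Lemma hom_rat (H K : {set gT}) :
  (#|Fstar_hom G H K|%:R = #|transporter G H K|%:R / #|'C_G(H)|%:R :> rat)%R.
Proof.
rewrite -card_hom natrM mulfK //; exact: natr_neq0 (cardG_gt0 _).
Qed.

Lemma sub_conj_case (k : {group gT} -> rat) (a : {group gT}) g :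
  (forall x, k x + \sum_(y | Rw x y) k y = cfun x)%R ->
  a \in O -> g \in G ->
  (\sum_(b in O) ((a :^ g \subset b) : nat)%:R * k b = cfun (a :^ g)%G)%R.
Proof.
move=> hk aO gG; rewrite -hk.
have agO : (a :^ g)%G \in O by rewrite O_conj.
rewrite (bigD1 (a :^ g)%G) //= subxx mul1r; congr (_ + _)%R.
rewrite big_mkcond [RHS]big_mkcond; apply: eq_bigr => b _ /=.
rewrite /Rw properEneq; case: (b \in O) => //=.
case: eqP => [->|ne]; first by rewrite eqxx /=.
have -> : (a :^ g != b :> {set gT}).
  by apply/eqP => e; apply: ne; apply: val_inj; rewrite /= e.
by case: (a :^ g \subset b) => /=; rewrite ?mul1r ?mul0r.
Qed.

Lemma weighting_exists : exists k, is_weighting p G k.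
Proof.
have Hwf : forall x y, Rw x y -> (#|G| - #|y| < #|G| - #|x|)%N.
  move=> x y /andP[yO pxy]; have := proper_card pxy.
  have := subset_leq_card (@O_sub _ _ _ _ yO); lia.
have [k hk] := @rec_exists _ Rw (fun x => #|G| - #|x|)%N cfun Hwf.
exists k => a aO.
have Ca := natr_neq0 (cardG_gt0 'C_G(a)).
have HG := natr_neq0 (cardG_gt0 G).
under eq_bigr => b _ do rewrite hom_rat card_tr mulrAC mulr_suml.
rewrite -mulr_suml exchange_big /=.
under eq_bigr => g gG do rewrite (@sub_conj_case k a g hk aO gG) /cfun /= card_centJ //.
rewrite sumr_const -mulr_natr; field.
by rewrite Ca HG.
Qed.
End W.
Section V.
Variables (gT : finGroupType) (p : nat) (G : {group gT}).
Local Notation O := (Fstar_obj p G).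

Definition Rn (x y : {group gT}) := (y \in O) && (y \proper x).

Lemma conjG_bij g : bijective (fun H : {group gT} => (H :^ g)%G).
Proof.
exists (fun H : {group gT} => (H :^ g^-1)%G) => H; apply: val_inj => /=.
  by rewrite conjsgK.
by rewrite conjsgKV.
Qed.

Lemma sum_conjO (F : {group gT} -> rat) g : g \in G ->
  (\sum_(H in O) F (H :^ g)%G = \sum_(H in O) F H)%R.
Proof.
move=> gG; rewrite [RHS](reindex (fun H : {group gT} => (H :^ g)%G)) /=.
  by apply: eq_bigl => H; rewrite O_conj.
by apply: onW_bij; exact: conjG_bij.
Qed.

Variable nu : {group gT} -> rat.
Hypothesis hnu : forall x, (nu x + \sum_(y | Rn x y) nu y = 1)%R.

Lemma nu_conj g x : g \in G -> nu (x :^ g)%G = nu x.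
Proof.
move=> gG.
have Hwf : forall x y, Rn x y -> (#|y| < #|x|)%N.
  by move=> a b /andP[_ /proper_card].
apply: (@rec_unique _ Rn (fun x => #|x|) (fun=> 1%R) Hwf (fun x => nu (x :^ g)%G) nu _ hnu).
move=> y; rewrite -(hnu (y :^ g)%G); congr (_ + _)%R.
rewrite [RHS](reindex (fun H : {group gT} => (H :^ g)%G)) /=.
  by apply: eq_bigl => H; rewrite /Rn O_conj // properJ.
by apply: onW_bij; exact: conjG_bij.
Qed.

Lemma nu_sum (K : {group gT}) : K \in O ->
  (\sum_(H in O) ((H \subset K) : nat)%:R * nu H = 1)%R.
Proof.
move=> KO; rewrite -[RHS](hnu K) (bigD1 K) //= subxx mul1r; congr (_ + _)%R.
rewrite big_mkcond [RHS]big_mkcond; apply: eq_bigr => b _ /=.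
rewrite /Rn properEneq; case: (b \in O) => //=.
case: eqP => [->|ne]; first by rewrite eqxx /=.
have -> : (b != K :> {set gT}).
  by apply/eqP => e; apply: ne; apply: val_inj; rewrite /= e.
by case: (b \subset K) => /=; rewrite ?mul1r ?mul0r.
Qed.

Definition kco (H : {group gT}) : rat := (nu H * #|'C_G(H)|%:R / #|G|%:R)%R.

Lemma coweighting : is_coweighting p G kco.
Proof.
move=> b bO.
have HG := natr_neq0 (cardG_gt0 G).
have E : forall u c g t : rat, (c != 0)%R -> (g != 0)%R -> (u * c / g * (t / c) = u / g * t)%R.
  by move=> u c g t c0 g0; field; rewrite c0 g0.
under eq_bigr => a aO.
  rewrite hom_rat /kco E ?natr_neq0 ?cardG_gt0 // card_tr mulr_sumr.
over.
rewrite exchange_big /=.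
under eq_bigr => g gG.
  under eq_bigr => H _ do rewrite mulrAC mulrC.
  rewrite -mulr_sumr.
  have := sum_conjO (fun H => nu H * ((H \subset b) : nat)%:R)%R g gG => /= e.
  under eq_bigr => H _ do rewrite -(nu_conj g H gG).
  rewrite e.
  under eq_bigr => H _ do rewrite mulrC.
  rewrite nu_sum // mulr1.
over.
by rewrite sumr_const -[(_ *+ _)%R]mulr_natr mulVf.
Qed.
End V.

Lemma leinster (gT : finGroupType) (p : nat) (G : {group gT}) k k' :
  is_weighting p G k -> is_coweighting p G k' ->
  (\sum_(b in Fstar_obj p G) k b = \sum_(a in Fstar_obj p G) k' a)%R.
Proof.
move=> hw hc.
transitivity (\sum_(b in Fstar_obj p G) (\sum_(a in Fstar_obj p G) k' a * (#|Fstar_hom G a b|)%:R) * k b)%R.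
  by apply: eq_bigr => b bO; rewrite hc // mul1r.
transitivity (\sum_(a in Fstar_obj p G) k' a * \sum_(b in Fstar_obj p G) (#|Fstar_hom G a b|)%:R * k b)%R.
  under eq_bigr => b _ do rewrite mulr_suml.
  rewrite exchange_big /=; apply: eq_bigr => a aO; rewrite mulr_sumr.
  by apply: eq_bigr => b _; rewrite mulrA.
by apply: eq_bigr => a aO; rewrite hw // mulr1.
Qed.
Section S.
Variables (gT : finGroupType) (p : nat) (G P : {group gT}).
Hypothesis sylP : P \in 'Syl_p(G).
Hypothesis abP : abelian P.
Local Notation O := (Fstar_obj p G).

Lemma sylP' : p.-Sylow(G) P. Proof. by move: sylP; rewrite inE. Qed.
Lemma sPG : P \subset G. Proof. exact: pHall_sub sylP'. Qed.

Lemma fusion (H : {group gT}) x : H \subset P -> x \in G -> H :^ x \subset P ->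
  x \in 'C_G(H) * 'N_G(P).
Proof.
move=> sHP xG sHxP.
have sPC : P \subset 'C_G(H :^ x).
  by rewrite subsetI sPG sub_abelian_cent.
have sPxC : P :^ x \subset 'C_G(H :^ x).
  rewrite subsetI sub_conjg (conjGid (groupVr xG)) sPG /=.
  by rewrite sub_abelian_cent ?abelianJ // conjSg.
have s1 : p.-Sylow('C_G(H :^ x)) P := pHall_subl sPC (subsetIl _ _) sylP'.
have s2 : p.-Sylow('C_G(H :^ x)) (P :^ x)%G.
  by apply: pHall_subl sPxC (subsetIl _ _) _; rewrite pHallJ // sylP'.
have [c cC ePx] := Sylow_trans s1 s2.
have cG : c \in G by case/setIP: cC.
have nN : x * c^-1 \in 'N_G(P).
  rewrite inE groupM ?groupV //=; apply/normP.
  by rewrite conjsgM ePx /= conjsgK.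
have dC : c ^ x^-1 \in 'C_G(H).
  rewrite inE groupJ ?groupV //=.
  by case/setIP: cC => _; rewrite /= centJ mem_conjg.
have -> : x = c ^ x^-1 * (x * c^-1) by rewrite conjgE invgK !mulgA mulgKV mulgK.
exact: mem_mulg.
Qed.

Lemma tr_eq (H : {group gT}) : H \subset P ->
  [set x in G | H :^ x \subset P] = 'C_G(H) * 'N_G(P).
Proof.
move=> sHP; apply/setP => x; rewrite inE; apply/andP/idP.
  by case=> xG sub; apply: fusion.
case/mulsgP => d n dC nN ->; case/setIP: dC => dG dH; case/setIP: nN => nG nP.
rewrite groupM //; split => //.
rewrite conjsgM (normP (subsetP (cent_sub H) d dH)).
by rewrite -(normP nP) conjSg.
Qed.

Lemma tr_card (H : {group gT}) : H \subset P ->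
  (#|[set x in G | H :^ x \subset P]| * #|'C_G(H) :&: 'N_G(P)| = #|'C_G(H)| * #|'N_G(P)|)%N.
Proof. by move=> sHP; rewrite tr_eq // mul_cardG. Qed.
End S.
Lemma card_setR (T : finType) (A : {set T}) (Q : pred T) :
  (#|[set x in A | Q x]|%:R = \sum_(x in A) (Q x : nat)%:R :> rat)%R.
Proof.
rewrite -natr_sum; congr (_ %:R)%R; rewrite -sum1_card big_mkcond /= [RHS]big_mkcond /=.
by apply: eq_bigr => g _; rewrite inE; case: (g \in A); case: (Q g).
Qed.

Section K.
Variables (gT : finGroupType) (p : nat) (G P : {group gT}).
Hypothesis sylP : P \in 'Syl_p(G).
Hypothesis abP : abelian P.
Local Notation O := (Fstar_obj p G).
Local Notation N := 'N_G(P).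

Definition tcard (H : {set gT}) := #|[set x in G | H :^ x \subset P]|.

Lemma tcard_conj (H : {set gT}) g : g \in G -> tcard (H :^ g) = tcard H.
Proof.
move=> gG; rewrite /tcard -[RHS](card_lcoset _ g^-1); apply: eq_card => x.
by rewrite mem_lcoset invgK !inE conjsgM groupMl.
Qed.

Lemma tcard_gt0 (H : {group gT}) : H \in O -> (0 < tcard H)%N.
Proof.
rewrite inO => /and3P[sHG pH _].
have [x xG sub] := Sylow_Jsub (@sylP' _ _ _ _ sylP) sHG pH.
by rewrite card_gt0; apply/set0Pn; exists x; rewrite inE xG.
Qed.

Variable nu : {group gT} -> rat.
Hypothesis hnu : forall x, (nu x + \sum_(y | @Rn _ p G x y) nu y = 1)%R.

Definition ff (H : {group gT}) : rat := (nu H * #|'C_G(H)|%:R / (tcard H)%:R)%R.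

Lemma ff_conj (H : {group gT}) g : g \in G -> ff (H :^ g)%G = ff H.
Proof. by move=> gG; rewrite /ff (@nu_conj _ _ _ _ hnu) //= card_centJ // tcard_conj. Qed.

Lemma step1 :
  (\sum_(H in O) nu H * #|'C_G(H)|%:R =
   (\sum_(H in O) ((H \subset P) : nat)%:R * ff H) *+ #|G|)%R.
Proof.
transitivity (\sum_(H in O) \sum_(x in G) ((H :^ x \subset P) : nat)%:R * ff H)%R.
  apply: eq_bigr => H HO; rewrite -mulr_suml -card_setR -/(tcard H) /ff.
  by rewrite [RHS]mulrC divfK // natr_neq0 // tcard_gt0.
rewrite exchange_big /= -sumr_const; apply: eq_bigr => x xG.
have := @sum_conjO _ p G (fun H => ((H \subset P) : nat)%:R * ff H)%R _ xG => /= <-.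
by apply: eq_bigr => H _; rewrite ff_conj.
Qed.
Lemma step2 :
  (\sum_(H in O) ((H \subset P) : nat)%:R * ff H =
   #|[set n in N | 'C_P[n] != 1%g]|%:R / #|N|%:R)%R.
Proof.
have N0 := natr_neq0 (cardG_gt0 N).
transitivity (\sum_(H in O) \sum_(n in N) (((H \subset 'C_P[n]) : nat)%:R * nu H / #|N|%:R))%R.
  apply: eq_bigr => H HO; case: (boolP (H \subset P)) => sHP /=.
    rewrite mul1r -mulr_suml -mulr_suml -card_setR.
    have -> : [set n in N | H \subset 'C_P[n]] = 'C_G(H) :&: N.
      apply/setP => n; rewrite !inE subsetI sHP sub_cent1 /=.
      by case: (n \in G); case: (P :^ n \subset P); case: (n \in 'C(H)).
    have T0 := natr_neq0 (tcard_gt0 H HO).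
    have E := @tr_card _ _ _ _ sylP abP _ sHP.
    have E' : (#|'C_G(H)|%:R = (tcard H)%:R * #|'C_G(H) :&: N|%:R / #|N|%:R :> rat)%R.
      by rewrite -natrM /tcard E natrM mulfK.
    rewrite /ff E'; field; by rewrite T0 N0.
  rewrite mul0r big1 // => n _.
  have -> : (H \subset 'C_P[n]) = false.
    apply/negbTE; apply: contra sHP => s; apply: subset_trans s (subsetIl _ _).
  by rewrite !mul0r.
rewrite exchange_big /=.
under eq_bigr => n _ do rewrite -mulr_suml.
rewrite -mulr_suml card_setR; congr (_ * _)%R.
rewrite [RHS]card_setR.
apply: eq_bigr => n nN.
have sCG : 'C_P[n] \subset G := subset_trans (subsetIl _ _) (@sPG _ _ _ _ sylP).
have pC : p.-group 'C_P[n] := pgroupS (subsetIl _ _) (pHall_pgroup (@sylP' _ _ _ _ sylP)).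
case: (boolP ('C_P[n] != 1)) => nt /=.
  have CO : ('C_P[n])%G \in O by rewrite inO sCG pC nt.
  by move: (@nu_sum _ _ _ _ hnu _ CO) => /= ->.
apply: big1 => H HO; move: nt; rewrite negbK => /eqP e.
have -> : (H \subset 'C_P[n]) = false.
  rewrite e subG1; apply/negbTE; by move: HO; rewrite inO => /and3P[].
by rewrite mul0r.
Qed.
End K.
Lemma conj_fix_comm (gT : finGroupType) (x c : gT) : x ^ c = x <-> commute x c.
Proof.
rewrite conjgE; split => h; first by rewrite /commute -{2}h mulKVg.
by rewrite h mulKg.
Qed.

Lemma fiber_eq (gT : finGroupType) (G P : {group gT}) (m n : gT) : m \in 'N_G(P) ->
  (n \in 'N_G(P)) && (conj_on P n == conj_on P m) = (n \in 'C_('N_G(P))(P) :* m).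
Proof.
move=> mN; rewrite mem_rcoset [in RHS]inE (groupMr _ (groupVr mN)).
case nN: (n \in 'N_G(P)) => //=.
apply/eqP/centP => [e y yP | h].
  apply/commute_sym/conj_fix_comm.
  have := congr1 (fun f : {ffun gT -> gT} => f y) e; rewrite /= !ffunE yP => ey.
  by rewrite conjgM ey conjgK.
apply/ffunP => y; rewrite !ffunE; case yP: (y \in P) => //.
rewrite -{1}(mulgKV m n) conjgM.
by have := h y yP => /commute_sym/conj_fix_comm ->.
Qed.

Lemma card_setN (T : finType) (A : {set T}) (Q : pred T) :
  #|[set x in A | Q x]| = \sum_(x in A) (Q x : nat).
Proof.
rewrite -sum1_card big_mkcond /= [RHS]big_mkcond /=.
by apply: eq_bigr => g _; rewrite inE; case: (g \in A); case: (Q g).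
Qed.

Lemma fiber (gT : finGroupType) (G P : {group gT}) (Qp : pred {ffun gT -> gT}) :
  #|[set n in 'N_G(P) | Qp (conj_on P n)]| =
  (#|[set phi in FG G P | Qp phi]| * #|'C_('N_G(P))(P)|)%N.
Proof.
rewrite [LHS]card_setN [#|[set phi in _ | _]|]card_setN (partition_big_imset (conj_on P)) /= big_distrl /=.
apply: eq_bigr => phi /imsetP[m mN ->].
transitivity (\sum_(n in 'N_G(P) | conj_on P n == conj_on P m) (Qp (conj_on P m) : nat)).
  by apply: eq_bigr => n /andP[_ /eqP ->].
rewrite sum_nat_const mulnC; congr (_ * _)%N.
rewrite -(card_rcoset _ m); apply: eq_card => n.
by rewrite -fiber_eq // unfold_in.
Qed.
Lemma CP_conj (gT : finGroupType) (P : {group gT}) n :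
  CP P (conj_on P n) = 'C_P[n].
Proof.
apply/setP => y; rewrite [in LHS]inE [in RHS]inE ffunE; case yP: (y \in P) => //=.
by apply/eqP/cent1P => /conj_fix_comm.
Qed.

Theorem corollary5p6 (gT : finGroupType) (p : nat) (G P : {group gT}) :
  prime p -> P \in 'Syl_p(G) -> abelian P ->
  Fstar_euler_char_is p G
    ((#|[set phi in FG G P | ([1 gT] \proper CP P phi)]|)%:R
       / (#|FG G P|)%:R)%R.
Proof.
move=> _ sylP abP.
have Hwf : forall x y, @Rn gT p G x y -> (#|y| < #|x|)%N.
  by move=> a b /andP[_ /proper_card].
have [nu hnu] := @rec_exists _ (@Rn gT p G) (fun x => #|x|) (fun=> 1%R) Hwf.
have [k hk] := @weighting_exists gT p G.
have hc := @coweighting gT p G nu hnu.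
have key : (\sum_(a in Fstar_obj p G) @kco gT G nu a =
    (#|[set phi in FG G P | ([1 gT] \proper CP P phi)]|)%:R / (#|FG G P|)%:R)%R.
  rewrite /kco -mulr_suml (@step1 _ _ _ _ sylP nu hnu) -mulr_natr mulfK ?natr_neq0 //.
  rewrite (@step2 _ _ _ _ sylP abP nu hnu).
  have e1 : [set n in 'N_G(P) | 'C_P[n] != 1] =
            [set n in 'N_G(P) | [1 gT] \proper CP P (conj_on P n)].
    by apply/setP => n; rewrite !inE CP_conj (proper1G 'C_P[n]%G).
  rewrite e1 (@fiber gT G P (fun phi => [1 gT] \proper CP P phi)).
  have e2 : #|'N_G(P)| = (#|FG G P| * #|'C_('N_G(P))(P)|)%N.
    have := @fiber gT G P predT.
    have -> : [set n in 'N_G(P) | predT (conj_on P n)] = 'N_G(P) by apply/setP => n; rewrite inE andbT.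
    by have -> : [set phi in FG G P | predT phi] = FG G P by apply/setP => phi; rewrite inE andbT.
  rewrite e2 !natrM invfM mulrACA divff ?mulr1 //.
  exact: natr_neq0 (cardG_gt0 _).
split.
  exists k; split => //; rewrite (@leinster _ _ _ _ _ hk hc); exact: key.
by exists (@kco gT G nu); split.
Qed.
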